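(* Consider the discrete-time system $x_{k+1}=f(x_k,u_k,w_k)$, $y_k=h(x_k,v_k)$ ($x\in\mathbb{R}^n$, $u\in\mathbb{R}^m$, $w\in\mathbb{R}^q$, $v\in\mathbb{R}^r$, $y\in\mathbb{R}^p$, $f,h$ continuously differentiable), and suppose there is a diffeomorphism $\phi$ such that $\bar{x}=\phi(x)$ transforms it into $$\bar{x}_{k+1}=f_1(\bar{x}_k,u_k)+Bf_2(w_k,\bar{x}_k,u_k),\qquad y_k=C\bar{x}_k+g(v_k),$$ with $C\in\mathbb{R}^{p\times n}$, $B\in\mathbb{R}^{n\times s}$ and $f_1,f_2,g$ continuously differentiable. If $\operatorname{rank}(CB)=\operatorname{rank}(B)$, then there exist a diffeomorphism $T=(T_\flat,T_\sharp):\mathbb{R}^n\to\mathbb{R}^{n_\flat+n_\sharp}$ and a continuously differentiable $\psi:\mathbb{R}^p\times\mathbb{R}^{n_\sharp}\times\mathbb{R}^r\to\mathbb{R}^{n_\flat}$ such that, writing $z=T(x)=(z^\flat,z^\sharp)$, $f_\sharp(z^\sharp,z^\flat,u,w):=T_\sharp(f(T^{-1}(z),u,w))$ and $h_T(z^\sharp,z^\flat,v):=h(T^{-1}(z),v)$: (a) $z^\flat=\psi(y,z^\sharp,v)$ whenever $y=h_T(z^\sharp,z^\flat,v)$, and (b) $\frac{\partial f_\sharp^i}{\partial w}(z^\sharp,z^\flat,u,w)=0$ for all $i\in\{1,\dots,n_\sharp\}$ and all arguments, where $f^i_\sharp$ is the $i$-th component of $f_\sharp$. *)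

(* Defs.v *)
From HB Require Import structures.
From mathcomp Require Import all_boot all_order all_algebra.
From mathcomp Require Import all_classical all_reals all_analysis.
Set Implicit Arguments. Unset Strict Implicit. Unset Printing Implicit Defensive.
Import Order.TTheory GRing.Theory Num.Theory.
Import numFieldNormedType.Exports.
Local Open Scope ring_scope.

(* Continuously differentiable (C^1) map between finite-dimensional normed
   spaces: differentiable everywhere, and the differential x |-> 'd f x is
   continuous (tested on every fixed direction v, which in finite dimension
   is the same as continuity in operator norm). *)
Definition C1 {R : realType} {U V : normedModType R} (f : U -> V) : Prop :=
  (forall x, differentiable f x) /\ (forall v : U, continuous (fun x => 'd f x v)).

Definition diffeo {R : realType} {U V : normedModType R}
  (f : U -> V) (g : V -> U) : Prop :=
  cancel f g /\ cancel g f /\ C1 f /\ C1 g.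

(* Main.v *)
Require Import Defs.
From HB Require Import structures.
From mathcomp Require Import all_boot all_order all_algebra.
From mathcomp Require Import all_classical all_reals all_analysis.
Import Order.TTheory GRing.Theory Num.Theory.
Import numFieldNormedType.Exports.
Local Open Scope ring_scope.

Set Implicit Arguments. Unset Strict Implicit. Unset Printing Implicit Defensive.

Lemma linalg (R : fieldType) n p s (C : 'M[R]_(p,n)) (B : 'M[R]_(n,s)) :
  \rank (C *m B) = \rank B ->
  exists nb ns (Kc : 'M[R]_(nb,n)) (K : 'M[R]_(ns,n)) (N : 'M[R]_(n, nb+ns))
    (L1 : 'M[R]_(n,p)) (L2 : 'M[R]_(n,ns)),
  K *m B = 0 /\ N *m col_mx Kc K = 1%:M /\ col_mx Kc K *m N = 1%:M /\
  L1 *m C + L2 *m K = 1%:M.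
Proof.
move=> hr.
set K := row_base (kermx B).
set Kc := row_base (kermx B)^C%MS.
exists _, _, Kc, K.
have KB : K *m B = 0.
  apply/sub_kermxP; rewrite (eq_row_base (kermx B)); exact: submx_refl.
have fullM : row_full (col_mx Kc K).
  rewrite -sub1mx -addsmxE (adds_eqmx (eq_row_base _) (eq_row_base _)) addsmxC.
  by rewrite sub1mx addsmx_compl_full.
have rM : \rank (col_mx Kc K) = n by apply/eqP.
have freeM : row_free (col_mx Kc K).
  rewrite /row_free rM mxrank_compl subnK //.
  exact: rank_leq_col.
have [N NM] := row_fullP fullM.
have [N' MN'] := row_freeP freeM.
have eN : N = N' by rewrite -[N]mulmx1 -MN' mulmxA NM mul1mx.
have rA : \rank (col_mx C K) = n.
  have := mxrank_mul_ker (col_mx C K) B.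
  rewrite mul_col_mx KB rank_col_mx0 hr.
  have -> : (col_mx C K :&: kermx B :=: kermx B)%MS.
    apply/capmx_idPr; rewrite -addsmxE -(eq_row_base (kermx B)).
    exact: addsmxSr.
  move=> <-; rewrite mxrank_ker subnKC //; exact: rank_leq_row.
have fA : row_full (col_mx C K) by rewrite /row_full rA.
have [L LA] := row_fullP fA.
exists N, (lsubmx L), (rsubmx L).
split; first exact: KB. split; first exact: NM. split; first by rewrite eN.
by rewrite -mul_row_col hsubmxK.
Qed.

Section S.
Variable R : realType.

Lemma C1_lin (U V : normedModType R) (f : {linear U -> V}) :
  continuous f -> C1 (f : U -> V).
Proof.
move=> fc; split => [x|v]; first exact: linear_differentiable.
have -> : (fun x => 'd (f : U -> V) x v) = fun=> f v.
  by apply/funext => x; rewrite diff_lin.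
exact: cst_continuous.
Qed.

Lemma C1_compl (U V W : normedModType R) (f : U -> V) (L : {linear V -> W}) :
  continuous L -> C1 f -> C1 ((L : V -> W) \o f).
Proof.
move=> Lc [df cf]; split => [x|v].
  by apply: differentiable_comp => //; exact: linear_differentiable.
have -> : (fun x => 'd ((L : V -> W) \o f) x v) = (L : V -> W) \o (fun x => 'd f x v).
  apply/funext => x; rewrite diff_comp //; last exact: linear_differentiable.
  by rewrite diff_lin.
move=> x; apply: continuous_comp; [exact: cf | exact: Lc].
Qed.

Lemma C1_compr (U V W : normedModType R) (L : {linear U -> V}) (f : V -> W) :
  continuous L -> C1 f -> C1 (f \o (L : U -> V)).
Proof.
move=> Lc [df cf]; split => [x|v].
  by apply: differentiable_comp => //; exact: linear_differentiable.
have -> : (fun x => 'd (f \o (L : U -> V)) x v) = (fun y => 'd f y (L v)) \o (L : U -> V).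
  apply/funext => x; rewrite diff_comp //; last exact: linear_differentiable.
  by rewrite /= diff_lin.
move=> x; apply: continuous_comp; [exact: Lc | exact: cf].
Qed.

Lemma C1_add (U V : normedModType R) (f g : U -> V) :
  C1 f -> C1 g -> C1 (f + g).
Proof.
move=> [df cf] [dg cg]; split => [x|v]; first exact: differentiableD.
have -> : (fun x => 'd (f + g) x v) = (fun x => 'd f x v) + (fun x => 'd g x v).
  by apply/funext => x; rewrite diffD //.
move=> x; apply: continuousD; [exact: cf | exact: cg].
Qed.

Lemma mx_cont (T : topologicalType) a b (f : T -> 'M[R]_(a,b)) :
  (forall i j, continuous (fun y => f y i j)) -> continuous f.
Proof.
move=> hc x; apply/cvgrPdist_lt => e e0.
have H : forall ij : 'I_a * 'I_b, \forall y \near x, `|f x ij.1 ij.2 - f y ij.1 ij.2| < e.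
  move=> ij; have := hc ij.1 ij.2 x; move/cvgrPdist_lt => /(_ e e0); exact.
have H' := filter_forall _ H.
near=> y.
rewrite /Num.Def.normr /= mx_normrE.
apply: bigmax_lt => // ij _; rewrite !mxE.
move: ij; near: y; exact: H'.
Unshelve. all: by end_near. Qed.

Lemma mulmx_cont a b c (M : 'M[R]_(a,b)) : continuous (fun x : 'M[R]_(b,c) => M *m x).
Proof.
apply: mx_cont => i j.
have -> : (fun y : 'M[R]_(b,c) => (M *m y) i j) = fun y => \sum_k M i k * y k j.
  by apply/funext => y; rewrite mxE.
elim: (index_enum _) => [|k s IH].
  under eq_fun do rewrite big_nil. exact: cst_continuous.
under eq_fun do rewrite big_cons.
move=> x.
apply: (@continuousD _ _ _ (fun y : 'M[R]_(b,c) => M i k * y k j) (fun y => \sum_(k0 <- s) M i k0 * y k0 j)); last exact: IH.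
apply: (@continuousM _ _ (fun=> M i k) (fun y : 'M[R]_(b,c) => y k j)); first exact: cst_continuous.
exact: coord_continuous.
Qed.
End S.

Lemma fst_cont (R : realType) (U V : normedModType R) : continuous (@fst U V).
Proof. by move=> [a b]; exact: cvg_fst. Qed.

Lemma snd_cont (R : realType) (U V : normedModType R) : continuous (@snd U V).
Proof. by move=> [a b]; exact: cvg_snd. Qed.

Theorem proposition1 (R : realType) (n m q r p s : nat)
  (f : 'cV[R]_n -> 'cV[R]_m -> 'cV[R]_q -> 'cV[R]_n)
  (h : 'cV[R]_n -> 'cV[R]_r -> 'cV[R]_p)
  (phi phiinv : 'cV[R]_n -> 'cV[R]_n)
  (f1 : 'cV[R]_n -> 'cV[R]_m -> 'cV[R]_n)
  (f2 : 'cV[R]_q -> 'cV[R]_n -> 'cV[R]_m -> 'cV[R]_s)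
  (g : 'cV[R]_r -> 'cV[R]_p)
  (C : 'M[R]_(p, n)) (B : 'M[R]_(n, s)) :
  C1 (fun xuw : 'cV[R]_n * 'cV[R]_m * 'cV[R]_q => f xuw.1.1 xuw.1.2 xuw.2) ->
  C1 (fun xv : 'cV[R]_n * 'cV[R]_r => h xv.1 xv.2) ->
  diffeo phi phiinv ->
  C1 (fun xu : 'cV[R]_n * 'cV[R]_m => f1 xu.1 xu.2) ->
  C1 (fun wxu : 'cV[R]_q * 'cV[R]_n * 'cV[R]_m => f2 wxu.1.1 wxu.1.2 wxu.2) ->
  C1 g ->
  (* transformed dynamics: xbar_{k+1} = f1(xbar_k,u_k) + B f2(w_k,xbar_k,u_k) *)
  (forall (x : 'cV[R]_n) (u : 'cV[R]_m) (w : 'cV[R]_q),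
      phi (f x u w) = f1 (phi x) u + B *m f2 w (phi x) u) ->
  (* transformed output: y_k = C xbar_k + g(v_k) *)
  (forall (x : 'cV[R]_n) (v : 'cV[R]_r), h x v = C *m phi x + g v) ->
  \rank (C *m B) = \rank B ->
  exists (nb ns : nat) (T : 'cV[R]_n -> 'cV[R]_(nb + ns))
         (Tinv : 'cV[R]_(nb + ns) -> 'cV[R]_n)
         (psi : 'cV[R]_p -> 'cV[R]_ns -> 'cV[R]_r -> 'cV[R]_nb),
    diffeo T Tinv /\
    C1 (fun yzv : 'cV[R]_p * 'cV[R]_ns * 'cV[R]_r => psi yzv.1.1 yzv.1.2 yzv.2) /\
    (* (a): z_flat = psi(y, z_sharp, v) whenever y = h_T(z_sharp, z_flat, v) *)
    (forall (zs : 'cV[R]_ns) (zb : 'cV[R]_nb) (v : 'cV[R]_r) (y : 'cV[R]_p),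
        y = h (Tinv (col_mx zb zs)) v -> zb = psi y zs v) /\
    (* (b): d f_sharp^i / d w_j = 0 everywhere, f_sharp = T_sharp(f(T^{-1} z, u, w)) *)
    (forall (zs : 'cV[R]_ns) (zb : 'cV[R]_nb) (u : 'cV[R]_m) (w : 'cV[R]_q)
            (i : 'I_ns) (j : 'I_q),
        'D_(delta_mx j 0 : 'cV[R]_q)
          (fun w' : 'cV[R]_q => dsubmx (T (f (Tinv (col_mx zb zs)) u w')) i 0) w
        = 0).
Proof.
move=> Cf Ch [phiK [phiinvK [Cphi Cphiinv]]] Cf1 Cf2 Cg hf hh hr.
have [nb [ns [Kc [K [N [L1 [L2 [KB [NM [MN LA]]]]]]]]]] := linalg hr.
pose M := col_mx Kc K.
exists nb, ns, (fun x => M *m phi x), (fun z => phiinv (N *m z)),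
  (fun y zs v => Kc *m (L1 *m (y - g v) + L2 *m zs)).
split.
  split; first by move=> x; rewrite /= mulmxA NM mul1mx phiK.
  split; first by move=> z; rewrite phiinvK mulmxA MN mul1mx.
  split.
    exact: (@C1_compl _ _ _ _ phi (mulmx M) (mulmx_cont (M:=M)) Cphi).
  exact: (@C1_compr _ _ _ _ (mulmx N) phiinv (mulmx_cont (M:=N)) Cphiinv).
split.
  pose F1 := (mulmx (Kc *m L1)) \o ((@fst _ _) \o (@fst ('cV[R]_p * 'cV[R]_ns)%type 'cV[R]_r)).
  pose F2 := (mulmx (Kc *m L2)) \o ((@snd _ _) \o (@fst ('cV[R]_p * 'cV[R]_ns)%type 'cV[R]_r)).
  pose F3 := (mulmx (- (Kc *m L1))) \o (g \o (@snd ('cV[R]_p * 'cV[R]_ns)%type 'cV[R]_r)).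
  have -> : (fun yzv : 'cV[R]_p * 'cV[R]_ns * 'cV[R]_r =>
     Kc *m (L1 *m (yzv.1.1 - g yzv.2) + L2 *m yzv.1.2)) = F1 + F2 + F3.
    apply/funext => t; rewrite /F1 /F2 /F3 /=.
    rewrite !fctE /= mulmxDr mulmxBr !mulmxA mulNmx mulmxBr !mulmxA.
    by rewrite addrAC.
  apply: C1_add; first apply: C1_add.
  - apply: (C1_compl (L:=mulmx (Kc *m L1)) (mulmx_cont (M:=Kc *m L1))).
    apply: (C1_compr (L:=fst) (@fst_cont _ _ _)).
    apply: (C1_lin (f:=fst)); exact: fst_cont.
  - apply: (C1_compl (L:=mulmx (Kc *m L2)) (mulmx_cont (M:=Kc *m L2))).
    apply: (C1_compr (L:=fst) (@fst_cont _ _ _)).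
    apply: (C1_lin (f:=snd)); exact: snd_cont.
  - apply: (C1_compl (L:=mulmx (- (Kc *m L1))) (mulmx_cont (M:=- (Kc *m L1)))).
    exact: (C1_compr (L:=snd) (@snd_cont _ _ _)).
split.
  move=> zs zb v y ->.
  rewrite hh phiinvK addrK.
  set xb := N *m col_mx zb zs.
  have : M *m xb = col_mx zb zs by rewrite /xb mulmxA MN mul1mx.
  rewrite /M mul_col_mx => /eq_col_mx [<- <-].
  by rewrite [in RHS](mulmxA L1) (mulmxA L2) -mulmxDl LA mul1mx.
move=> zs zb u w i j.
set x := phiinv (N *m col_mx zb zs).
have -> : (fun w' : 'cV[R]_q => dsubmx (M *m phi (f x u w')) i 0)
    = cst ((K *m f1 (phi x) u) i 0).
  apply/funext => w'.
  by rewrite hf /M mul_col_mx col_mxKd mulmxDr mulmxA KB mul0mx addr0.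
exact: derive_cst.
Qed.
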